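(* Let $N\ge1$, $X=(x_1,\dots,x_N)$, $Y=(y_1,\dots,y_N)\in(\mathbb C\setminus\{0\})^N$ with $x_i\ne y_j$ for all $i,j$, and let $z\in\mathbb C\setminus\{1\}$. Then $$\sum_{a,b=1}^N(-1)^{a+b}y_b\det\Big[\frac{z}{x_i-y_j}\frac{y_j}{x_i}+\frac{1}{-x_i+y_j}\frac{x_i}{y_j}\Big]_{i\ne a,\,j\ne b}=(1-z)^{N-2}\Big(\hat H(X;Y)+z\prod_{i=1}^N\frac{y_i}{x_i}\hat H(Y;X)\Big)\det\Big[\frac{1}{y_j-x_i}\Big]_{i,j=1}^N.$$
   Context: $\det[\cdot]_{i\ne a,j\ne b}$ is the $(N-1)\times(N-1)$ determinant of the matrix with rows $i\in\{1,\dots,N\}\setminus\{a\}$ and columns $j\in\{1,\dots,N\}\setminus\{b\}$ in increasing order (equal to $1$ when $N=1$). For finite vectors $W=(\dots,w_i,\dots)$, $W'=(\dots,w'_{i'},\dots)$, $\hat H(W;W')=\frac12\big(\sum_iw_i-\sum_{i'}w'_{i'}\big)^2-\frac12\big(\sum_iw_i^2-\sum_{i'}(w'_{i'})^2\big)$. *)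

(* Defs.v *)
From HB Require Import structures.
From mathcomp Require Import all_boot all_order all_algebra.
From mathcomp Require Import complex.
Set Implicit Arguments. Unset Strict Implicit. Unset Printing Implicit Defensive.
Import Order.TTheory GRing.Theory Num.Theory.
Local Open Scope ring_scope.

Definition Hhat (F : fieldType) (n m : nat) (W : 'I_n -> F) (W' : 'I_m -> F) : F :=
  2^-1 * (\sum_(i < n) W i - \sum_(i < m) W' i) ^+ 2
  - 2^-1 * (\sum_(i < n) W i ^+ 2 - \sum_(i < m) W' i ^+ 2).

Definition minor_det (F : comRingType) (n : nat) (A : 'M[F]_n.+1) (a b : 'I_n.+1) : F :=
  \det (row' a (col' b A)).

(* Main.v *)
Require Import Defs.
From HB Require Import structures.
From mathcomp Require Import all_boot all_order all_algebra.
From mathcomp Require Import complex.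
From mathcomp Require Import ring lra zify.
Set Implicit Arguments. Unset Strict Implicit. Unset Printing Implicit Defensive.
Import Order.TTheory GRing.Theory Num.Theory.
Local Open Scope ring_scope.

Section Gen.
Variable F : fieldType.

Lemma det2 (X : 'M[F]_2) : \det X = X 0 0 * X 1 1 - X 0 1 * X 1 0.
Proof.
rewrite (expand_det_row _ 0) !big_ord_recr big_ord0 /= add0r /cofactor !det_mx11 !mxE /=.
rewrite expr0 expr1 mul1r mulN1r mulrN.
by congr (X _ _ * X _ _ - X _ _ * X _ _); apply/val_inj.
Qed.

Lemma WA m n (A : 'M[F]_(m, n)) (B : 'M[F]_(n, m)) :
  \det (1%:M + A *m B) = \det (1%:M + B *m A).
Proof.
have e1 : block_mx 1%:M A (- B) 1%:M =
   block_mx 1%:M 0 (- B) 1%:M *m block_mx 1%:M A 0 (1%:M + B *m A).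
  rewrite mulmx_block ?mul1mx ?mulmx1 ?mul0mx ?mulmx0 ?addr0 ?add0r.
by rewrite mulNmx addrCA addNr addr0.
have e2 : block_mx 1%:M A (- B) 1%:M =
   block_mx 1%:M A 0 1%:M *m block_mx (1%:M + A *m B) 0 (- B) 1%:M.
  rewrite mulmx_block ?mul1mx ?mulmx1 ?mul0mx ?mulmx0 ?addr0 ?add0r.
  by rewrite mulmxN addrK.
have := congr1 determinant e1; rewrite e2 !det_mulmx det_lblock det_ublock.
by rewrite det_ublock det_lblock !det1 !mul1r !mulr1 => ->.
Qed.


Lemma mulcr_entry n (u : 'cV[F]_n) (v : 'rV[F]_n) i j : (u *m v) i j = u i 0 * v 0 j.
Proof. by rewrite !mxE big_ord1. Qed.

Lemma rank1 n (M : 'M[F]_n) (u : 'cV_n) (v : 'rV_n) :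
  \det (M + u *m v) = \det M + \sum_i \sum_j u i 0 * v 0 j * cofactor M i j.
Proof.
pose uk k := \col_(i < n) (if (i < k)%N then u i 0 else 0).
suff H : forall k, (k <= n)%N -> \det (M + uk k *m v) =
   \det M + \sum_(i < n | (i < k)%N) \sum_j u i 0 * v 0 j * cofactor M i j.
  have := H n (leqnn n).
  have -> : uk n = u by apply/matrixP => i j; rewrite !mxE ltn_ord ord1.
  by move=> ->; congr (_ + _); apply: eq_bigl => i; rewrite ltn_ord.
elim=> [_|k IH Hk].
  have -> : uk 0%N = 0 by apply/matrixP => i j; rewrite !mxE.
  by rewrite mul0mx addr0 big_pred0 ?addr0.
pose i0 := Ordinal Hk.
pose B := M + uk k *m v.
pose C := \matrix_(i, j) (if i == i0 then v 0 j else B i j).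
pose C0 := \matrix_(i, j) (if i == i0 then v 0 j else M i j).
have dA : \det (M + uk k.+1 *m v) = 1 * \det B + u i0 0 * \det C.
  apply: (@determinant_multilinear F n _ B C i0 1 (u i0 0)).
  - apply/rowP => j; rewrite !mxE !big_ord1 !mxE eqxx ltnSn.
    by rewrite ltnn mul0r addr0 mul1r.
  - apply/matrixP => i j; rewrite !mxE !big_ord1 !mxE.
    case: ltngtP (neq_lift i0 i) => //.
    + by move=> h1 _; rewrite (ltn_trans h1 (ltnSn _)).
    + by move=> h1 _; rewrite ltnS leqNgt h1 mul0r.
    + by move=> e /eqP []; apply: val_inj.
  - apply/matrixP => i j; rewrite !mxE [lift _ _ == _]eq_sym (negPf (neq_lift i0 i)) !big_ord1 !mxE.
    case: ltngtP (neq_lift i0 i) => //.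
    + by move=> h1 _; rewrite (ltn_trans h1 (ltnSn _)).
    + by move=> h1 _; rewrite ltnS leqNgt h1 mul0r.
    + by move=> e /eqP []; apply: val_inj.
pose E : 'M[F]_n := 1%:M + uk k *m (delta_mx 0 i0).
have eC : C = E *m C0.
  rewrite mulmxDl mul1mx -mulmxA.
  have -> : delta_mx 0 i0 *m C0 = v.
    apply/rowP => j; rewrite !mxE (bigD1 i0) //= big1 ?addr0.
      by rewrite !mxE !eqxx mul1r.
    by move=> i /negPf ni; rewrite !mxE ni andbF mul0r.
  apply/matrixP => i j; rewrite !mxE !big_ord1 !mxE.
  by case: eqP => [-> | _] //=; rewrite ltnn !mul0r !addr0.
have dE : \det E = 1.
  rewrite -det_tr det_trig.
    apply: big1 => i _; rewrite !mxE !big_ord1 !mxE.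
    case: (i =P i0) => [->|/eqP ni] /=; first by rewrite eqxx ltnn mul0r addr0.
    by rewrite eqxx mulr0 addr0.
  apply/is_trig_mxP => i j lij; rewrite !mxE !big_ord1 !mxE.
  have -> : (j == i) = false by rewrite -val_eqE /= gtn_eqF.
  rewrite add0r.
  case: (i =P i0) => [ji|_]; last by rewrite mulr0.
  by rewrite ji /= in lij; rewrite ltnNge (ltnW lij) mul0r.
have dC : \det C = \sum_j v 0 j * cofactor M i0 j.
  rewrite eC det_mulmx dE mul1r (expand_det_row _ i0).
  apply: eq_bigr => j _; rewrite !mxE eqxx; congr (_ * _).
  rewrite /cofactor; congr (_ * \det _).
  apply/matrixP => a b; rewrite !mxE [lift _ _ == _]eq_sym (negPf (neq_lift i0 a)) //.
rewrite dA mul1r /B IH ?(ltnW Hk) // dC -addrA; congr (_ + _).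
rewrite [in RHS](bigD1 i0) //= addrC; congr (_ + _).
  by rewrite big_distrr /=; apply: eq_bigr => j _; rewrite mulrA.
apply: eq_bigl => i; rewrite ltnS -val_eqE /=.
by case: (ltngtP i k).
Qed.


Lemma coef_step (c : F) (p : {poly F}) k :
  ('X^2 * ((c%:P - 'X) * p))`_k.+1 = c * ('X^2 * p)`_k.+1 - ('X^2 * p)`_k.
Proof.
rewrite mulrCA mulrBl coefB coefCM coefXM /=. done.
Qed.

Definition Pr (I : Type) (r : seq I) (P : pred I) (a : I -> F) : {poly F} :=
  \prod_(i <- r | P i) ((a i)%:P - 'X).

Lemma coefPr (I : Type) (r : seq I) (P : pred I) (a : I -> F) :
  let m := count P r in
  let S := \sum_(i <- r | P i) a i in
  let S2 := \sum_(i <- r | P i) a i ^+ 2 in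
  [/\ forall k, (m + 2 < k)%N -> ('X^2 * Pr r P a)`_k = 0,
      ('X^2 * Pr r P a)`_(m + 2) = (-1) ^+ m,
      ('X^2 * Pr r P a)`_(m + 1) = - (-1) ^+ m * S &
      2 * ('X^2 * Pr r P a)`_m = (-1) ^+ m * (S ^+ 2 - S2)].
Proof.
rewrite /Pr; elim: r => [|i r IH] /=.
  rewrite !big_nil mulr1 !coefXn /=; split => //.
  - by move=> k hk; rewrite coefXn; case: eqP hk => // ->.
  - by rewrite mulr0.
  - by rewrite expr0n subrr !mulr0.
move: IH; rewrite !big_cons; case: (P i) => /=; last by rewrite add0n.
set S := \sum_(j <- r | P j) a j; set S2 := \sum_(j <- r | P j) a j ^+ 2.
set m := count P r; set Q := \prod_(j <- r | P j) _.
case=> h0 h1 h2 h3; rewrite add1n; split.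
- case=> // k hk; rewrite coef_step (h0 k.+1) ?(h0 k) ?mulr0 ?subr0 //; lia.
- rewrite (_ : (m.+1 + 2)%N = (m + 2).+1); last lia.
  rewrite coef_step h1 h0; last lia.
  by rewrite mulr0 sub0r exprS mulN1r.
- rewrite (_ : (m.+1 + 1)%N = (m + 1).+1); last lia.
  rewrite coef_step h2 (_ : (m + 1).+1 = (m + 2)%N); last lia.
  rewrite h1 exprS; ring.
- rewrite addn1 in h2; rewrite coef_step mulrBr (mulrCA 2) h2 h3 [(-1) ^+ m.+1]exprS. ring.
Qed.

Definition cf (p : {poly F}) k := ('X^2 * p)`_k.
Lemma cfD (p q : {poly F}) k : cf (p + q) k = cf p k + cf q k.
Proof. by rewrite /cf mulrDr coefD. Qed.
Lemma cfB (p q : {poly F}) k : cf (p - q) k = cf p k - cf q k.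
Proof. by rewrite /cf mulrBr coefB. Qed.
Lemma cfZ c (p : {poly F}) k : cf (c *: p) k = c * cf p k.
Proof. by rewrite /cf -scalerAr coefZ. Qed.
Lemma cf_sum (I : finType) (G : I -> {poly F}) k :
  cf (\sum_i G i) k = \sum_i cf (G i) k.
Proof. by rewrite /cf mulr_sumr coef_sum. Qed.
Lemma cfX (p : {poly F}) k : cf ('X * p) k.+1 = cf p k.
Proof. by rewrite /cf mulrCA coefXM. Qed.
Lemma cf_coef (p : {poly F}) k : p`_k = cf p k.+2.
Proof. by rewrite /cf coefXnM /= !subSS subn0. Qed.

Lemma poly0_roots (p : {poly F}) (rs : seq F) :
  (size p <= size rs)%N -> uniq rs -> all (root p) rs -> p = 0.
Proof.
move=> hs hu hr; case: (eqVneq p 0) => // nz.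
by have := max_poly_roots nz hr hu; rewrite ltnNge hs.
Qed.

Section Cauchy.
Variable n : nat.
Local Notation N := n.+1.

Definition Qp (a : 'I_N -> F) j := Pr (index_enum 'I_N) (fun k => k != j) a.
Definition Pp (a : 'I_N -> F) := Pr (index_enum 'I_N) predT a.

Lemma countQ (j : 'I_N) : count (fun k => k != j) (index_enum 'I_N) = n.
Proof. by rewrite -sum1_count sum1_card cardC1 card_ord. Qed.
Lemma countP : count predT (index_enum 'I_N) = N.
Proof. by rewrite -sum1_count sum1_card card_ord. Qed.

Lemma evalP a s : (Pp a).[s] = \prod_k (a k - s).
Proof.
rewrite /Pp /Pr horner_prod; apply: eq_bigr => k _.
by rewrite hornerD hornerN hornerC hornerX.
Qed.
Lemma evalQ a j s : (Qp a j).[s] = \prod_(k | k != j) (a k - s).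
Proof.
rewrite /Qp /Pr horner_prod; apply: eq_bigr => k _.
by rewrite hornerD hornerN hornerC hornerX.
Qed.

Lemma evalS a (w : 'I_N -> F) s (hs : forall j, a j != s) :
  (\sum_j w j *: Qp a j).[s] = (Pp a).[s] * \sum_j w j / (a j - s).
Proof.
rewrite horner_sum mulr_sumr; apply: eq_bigr => j _.
rewrite hornerZ evalQ evalP [\prod_(k < N) _](bigD1 j) //=.
have := hs j; rewrite -subr_eq0 => h; field.
by [].
Qed.

Lemma cfQ a j :
  [/\ forall k, (n.+2 < k)%N -> cf (Qp a j) k = 0,
      cf (Qp a j) n.+2 = (-1) ^+ n &
      cf (Qp a j) n.+1 = - (-1) ^+ n * (\sum_k a k - a j)].
Proof.
have [h0 h1 h2 _] := coefPr (index_enum 'I_N) (fun k => k != j) a.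
rewrite countQ addn2 addn1 in h0 h1 h2; split => //.
rewrite /cf /Qp h2 [\sum_(k < N) _](bigD1 j) //=; congr (_ * _).
by rewrite addrC addrK.
Qed.

Lemma cfP a :
  [/\ forall k, (n.+3 < k)%N -> cf (Pp a) k = 0,
      cf (Pp a) n.+3 = (-1) ^+ n.+1,
      cf (Pp a) n.+2 = - (-1) ^+ n.+1 * (\sum_k a k) &
      2 * cf (Pp a) n.+1 = (-1) ^+ n.+1 * ((\sum_k a k) ^+ 2 - \sum_k a k ^+ 2)].
Proof.
have [h0 h1 h2 h3] := coefPr (index_enum 'I_N) predT a.
by rewrite countP addn2 addn1 in h0 h1 h2 h3; split.
Qed.

Lemma cfS (a w : 'I_N -> F) :
  [/\ forall k, (n.+2 < k)%N -> cf (\sum_j w j *: Qp a j) k = 0,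
      cf (\sum_j w j *: Qp a j) n.+2 = (-1) ^+ n * \sum_j w j &
      cf (\sum_j w j *: Qp a j) n.+1 =
        - (-1) ^+ n * ((\sum_k a k) * \sum_j w j - \sum_j a j * w j)].
Proof.
split.
- move=> k hk; rewrite cf_sum big1 // => j _; rewrite cfZ.
  by have [h0 _ _] := cfQ a j; rewrite h0 // mulr0.
- rewrite cf_sum mulr_sumr; apply: eq_bigr => j _; rewrite cfZ.
  by have [_ h1 _] := cfQ a j; rewrite h1 mulrC.
- rewrite cf_sum; transitivity
    (\sum_j (- (-1) ^+ n * ((\sum_k a k) * w j - a j * w j))).
    apply: eq_bigr => j _.
    rewrite cfZ; have [_ _ h2] := cfQ a j; rewrite h2; ring.
  by rewrite -mulr_sumr sumrB -mulr_sumr.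
Qed.

Lemma all_root_map (p : {poly F}) (a : 'I_N -> F) :
  (forall j, p.[a j] = 0) -> all (root p) [seq a j | j <- enum 'I_N].
Proof. by move=> h; apply/allP => r /mapP [j _ ->]; rewrite /root h. Qed.

Lemma evalS_node (a w : 'I_N -> F) (ha : injective a) i :
  (\sum_j w j *: Qp a j).[a i] = w i * \prod_(k | k != i) (a k - a i).
Proof.
rewrite horner_sum (bigD1 i) //= big1 ?addr0; first by rewrite hornerZ evalQ.
move=> j ji; rewrite hornerZ evalQ (bigD1 i) /=; last by rewrite eq_sym.
by rewrite subrr mul0r mulr0.
Qed.

Lemma prod_nodes_neq0 (a : 'I_N -> F) (ha : injective a) i :
  \prod_(k | k != i) (a k - a i) != 0.
Proof.
apply/prodf_neq0 => k ki; rewrite subr_eq0; apply/eqP => /ha e.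
by rewrite e eqxx in ki.
Qed.

Definition Cm (x y : 'I_N -> F) : 'M[F]_N := \matrix_(i, j) (1 / (y j - x i)).

Lemma Cm_unit (x y : 'I_N -> F) (hx : injective x) (hy : injective y)
  (hxy : forall i j, x i != y j) : Cm x y \in unitmx.
Proof.
rewrite unitmxE unitfE; apply/negP => /det0P [v nz hv].
have hv' : forall j, \sum_i v 0 i / (x i - y j) = 0.
  move=> j; have := congr1 (fun M : 'M[F]_(1, N) => M 0 j) hv; rewrite !mxE => e.
  transitivity (- \sum_i v 0 i * Cm x y i j); last by rewrite e oppr0.
  rewrite -sumrN; apply: eq_bigr => i _; rewrite mxE.
  have := hxy i j; rewrite -subr_eq0 => h.
  have h' : y j - x i != 0 by rewrite -opprB oppr_eq0.
  by field; rewrite h h'.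
set T := \sum_i v 0 i *: Qp x i.
have T0 : T = 0.
  apply: (@poly0_roots _ [seq y j | j <- enum 'I_N]).
  - rewrite size_map size_enum_ord; apply/leq_sizeP => k hk.
    have [h0 _ _] := cfS x (fun i => v 0 i).
    by rewrite cf_coef h0 // ltnS ltnS.
  - by rewrite map_inj_uniq ?enum_uniq.
  - apply: all_root_map => j; rewrite /T evalS ?hv' ?mulr0 //.
apply/negP: nz; rewrite negbK; apply/eqP/rowP => i; rewrite mxE.
have := congr1 (fun p => p.[x i]) T0; rewrite /= /T evalS_node // horner0.
by move/eqP; rewrite mulf_eq0 (negPf (prod_nodes_neq0 hx i)) orbF => /eqP.
Qed.

Lemma sign_cancel (A : F) : (-1) ^+ n * A = 0 -> A = 0.
Proof. by move/eqP; rewrite mulf_eq0 signr_eq0 => /eqP. Qed.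

Lemma cf0 k : cf 0 k = 0.
Proof. by rewrite /cf mulr0 coef0. Qed.

Lemma Pp_root (a : 'I_N -> F) i : (Pp a).[a i] = 0.
Proof. by rewrite evalP (bigD1 i) //= subrr mul0r. Qed.

Lemma sys_one (x y w : 'I_N -> F) (hx : injective x)
  (hxy : forall i j, x i != y j)
  (hw : forall i, \sum_j w j / (y j - x i) = 1) :
  \sum_j w j = \sum_k y k - \sum_k x k /\
  2 * \sum_j y j * w j = (\sum_k x k - \sum_k y k) ^+ 2
                         - (\sum_k x k ^+ 2 - \sum_k y k ^+ 2).
Proof.
set G := \sum_j w j *: Qp y j - Pp y + Pp x.
have hyx : forall i j, y j != x i by move=> i j; rewrite eq_sym.
have G0 : G = 0.
  apply: (@poly0_roots _ [seq x j | j <- enum 'I_N]).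
  - rewrite size_map size_enum_ord; apply/leq_sizeP => k hk.
    have [h0 _ _] := cfS y w; have [p0 p1 _ _] := cfP y; have [q0 q1 _ _] := cfP x.
    rewrite cf_coef /G cfD cfB h0; last by rewrite ltnS ltnS.
    case: (ltngtP k n.+1) hk => // [hk' _|-> _].
      by rewrite p0 ?q0 ?subrr ?addr0 // ltnS ltnS.
    by rewrite p1 q1 sub0r addNr.
  - by rewrite map_inj_uniq ?enum_uniq.
  - apply: all_root_map => i; rewrite /G !hornerE evalS // hw Pp_root.
    by rewrite mulr1 subrr add0r.
have [_ s1 s2] := cfS y w; have [_ _ p2 p3] := cfP y; have [_ _ q2 q3] := cfP x.
have E1 := congr1 (fun p => cf p n.+2) G0.
rewrite /= /G cfD cfB s1 p2 q2 cf0 in E1.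
have hs : \sum_j w j = \sum_k y k - \sum_k x k.
  apply/eqP; rewrite -subr_eq0; apply/eqP; apply: sign_cancel.
  by rewrite -[in RHS]E1 [(-1) ^+ n.+1]exprS; ring.
split => //.
have E2 := congr1 (fun p => 2 * cf p n.+1) G0.
rewrite /= /G cfD cfB mulrDr mulrBr p3 q3 s2 cf0 mulr0 hs in E2.
apply/eqP; rewrite -subr_eq0; apply/eqP; apply: sign_cancel.
  by rewrite -[in RHS]E2 [(-1) ^+ n.+1]exprS; ring.
Qed.

Lemma sys_p (x y w : 'I_N -> F) (hx : injective x)
  (hxy : forall i j, x i != y j) (hx0 : forall i, x i != 0)
  (hw : forall i, \sum_j w j / (y j - x i) = 1 / x i) :
  let c := (\prod_k y k) / (\prod_k x k) in
  \sum_j w j = c - 1 /\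
  \sum_j y j * w j = c * (\sum_k y k - \sum_k x k).
Proof.
move=> c.
set G := (\sum_j w j *: Qp y j) * 'X - Pp y + c *: Pp x.
have hyx : forall i j, y j != x i by move=> i j; rewrite eq_sym.
have px0 : \prod_k x k != 0 by apply/prodf_neq0.
have G0 : G = 0.
  apply: (@poly0_roots _ (0 :: [seq x j | j <- enum 'I_N])).
  - rewrite /= size_map size_enum_ord; apply/leq_sizeP => k hk.
    have [h0 _ _] := cfS y w; have [p0 _ _ _] := cfP y; have [q0 _ _ _] := cfP x.
    rewrite cf_coef /G cfD cfB cfZ mulrC cfX h0 ?p0 ?q0 ?mulr0 ?subrr ?addr0 //;
      rewrite ?ltnS //; apply: (leq_trans _ hk) => //.
  - rewrite cons_uniq map_inj_uniq ?enum_uniq // andbT.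
    by apply/mapP => -[j _ /esym/eqP]; rewrite (negPf (hx0 j)).
  - rewrite /= all_root_map ?andbT.
      rewrite /root /G !hornerE !evalP.
      under eq_bigr do rewrite subr0.
      under [\prod_k (x k - 0)]eq_bigr do rewrite subr0.
      by rewrite /c divfK // addNr.
    move=> i; rewrite /G !hornerE evalS // hw Pp_root mulr0 addr0.
    by have := hx0 i => h; field.
have [_ s1 s2] := cfS y w; have [_ p1 p2 _] := cfP y; have [_ q1 q2 _] := cfP x.
have E1 := congr1 (fun p => cf p n.+3) G0.
rewrite /= /G cfD cfB cfZ mulrC cfX s1 p1 q1 cf0 in E1.
have hs : \sum_j w j = c - 1.
  apply/eqP; rewrite -subr_eq0; apply/eqP; apply: sign_cancel.
  by rewrite -[in RHS]E1 [(-1) ^+ n.+1]exprS; ring.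
split => //.
have E2 := congr1 (fun p => cf p n.+2) G0.
rewrite /= /G cfD cfB cfZ mulrC cfX s2 p2 q2 cf0 hs in E2.
apply/eqP; rewrite -subr_eq0; apply/eqP; apply: sign_cancel.
by rewrite -[in RHS]E2 [(-1) ^+ n.+1]exprS; ring.
Qed.

End Cauchy.

Lemma detZUV n (C : 'M[F]_n.+1) (U : 'M[F]_(n.+1, 2)) (V : 'M[F]_(2, n.+1)) (t : F) :
  C \in unitmx -> t != 0 ->
  \det (t *: C + U *m V) =
  t ^+ n.+1 * \det C * \det (1%:M + (t^-1 *: V) *m (invmx C *m U)).
Proof.
move=> hC ht.
have -> : t *: C + U *m V = t *: (C *m (1%:M + (invmx C *m U) *m (t^-1 *: V))).
  rewrite mulmxDr mulmx1 !mulmxA mulmxV // mul1mx scalerDr -scalemxAr scalerA.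
  by rewrite mulfV // scale1r.
by rewrite detZ det_mulmx WA mulrA.
Qed.

End Gen.

Theorem main_gen (F : fieldType) (h2 : (2 : F) != 0) (n : nat) (x y : 'I_n.+1 -> F) (z : F)
  (hx : forall i, x i != 0) (hy : forall j, y j != 0)
  (hxy : forall i j, x i != y j) (hz : z != 1) :
  \sum_(a < n.+1) \sum_(b < n.+1)
     (-1) ^+ (a + b) * y b *
     minor_det (\matrix_(i, j) (z / (x i - y j) * (y j / x i)
                                + 1 / (- x i + y j) * (x i / y j))) a b
  = (1 - z) ^ (n.+1%:Z - 2) *
    (Hhat x y + z * (\prod_(i < n.+1) (y i / x i)) * Hhat y x) *
    \det (\matrix_(i, j) (1 / (y j - x i))).
Proof.
set M := \matrix_(i, j) _.
set C := \matrix_(i, j) (1 / (y j - x i)).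
pose u : 'cV[F]_n.+1 := const_mx 1.
pose v : 'rV[F]_n.+1 := \row_j y j.
have -> : \sum_(a < n.+1) \sum_(b < n.+1) (-1) ^+ (a + b) * y b * minor_det M a b
          = \det (M + u *m v) - \det M.
  rewrite rank1 addrC addKr; apply: eq_bigr => a _; apply: eq_bigr => b _.
  rewrite !mxE /cofactor /minor_det; set e := (-1) ^+ _; ring.
case: (boolP (injectiveb x)) => [/injectiveP injx|/injectivePn [i1 [i2 ni e]]]; last first.
  have d0 : forall A : 'M[F]_n.+1, A i1 =1 A i2 -> \det A = 0.
    by move=> A; apply: determinant_alternate.
  by rewrite !d0 ?subrr ?mulr0 //; move=> j; rewrite !mxE ?big_ord1 ?mxE e.
case: (boolP (injectiveb y)) => [/injectiveP injy|/injectivePn [j1 [j2 nj e]]]; last first.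
  have d0 : forall A : 'M[F]_n.+1, A^T j1 =1 A^T j2 -> \det A = 0.
    by move=> A h; rewrite -det_tr; apply: determinant_alternate h.
  by rewrite !d0 ?subrr ?mulr0 //; move=> i; rewrite !mxE ?big_ord1 ?mxE e.
have hC : C \in unitmx := Cm_unit injx injy hxy.
have hz' : 1 - z != 0 by rewrite subr_eq0 eq_sym.
pose U : 'M[F]_(n.+1, 2) := \matrix_(i, k) (if k == 0 then 1 / x i else 1).
pose V0 : 'M[F]_(2, n.+1) := \matrix_(k, j) (if k == 0 then - z else - (1 / y j)).
pose V1 : 'M[F]_(2, n.+1) := \matrix_(k, j) (if k == 0 then - z else y j - 1 / y j).
have e10 : ((1 : 'I_2) == 0) = false by [].
have eM : M = (1 - z) *: C + U *m V0.
  apply/matrixP => i j; rewrite !mxE !big_ord_recr big_ord0 /= !mxE /= ?e10.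
  have h1 := hx i; have h2' := hy j; have h3 := hxy i j.
  have h4 : x i - y j != 0 by rewrite subr_eq0.
  have h5 : y j - x i != 0 by rewrite subr_eq0 eq_sym.
  have h6 : - x i + y j != 0 by rewrite addrC.
  by field; rewrite h1 h2' h4 h5.
have eMu : M + u *m v = (1 - z) *: C + U *m V1.
  apply/matrixP => i j; rewrite eM !mxE !big_ord_recr big_ord0 /= !mxE /= ?e10.
  rewrite !big_ord0; ring.
rewrite eMu eM !detZUV //.
set W := invmx C *m U.
have hW : C *m W = U by rewrite /W mulmxA mulmxV // mul1mx.
have hwl : forall l i, \sum_j W j l / (y j - x i) = U i l.
  move=> l i; rewrite -hW mxE; apply: eq_bigr => j _.
  by rewrite /C mxE div1r mulrC.
have hw1 : forall i, \sum_j W j 1 / (y j - x i) = 1 by move=> i; rewrite hwl mxE.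
have hw0 : forall i, \sum_j W j 0 / (y j - x i) = 1 / x i by move=> i; rewrite hwl mxE.
have [s1 s1y] := sys_one injx hxy hw1.
have [sp spy] := sys_p injx hxy hx hw0.
set N := n.+1.
have ent : forall (V : 'M[F]_(2, N)) k l, (1%:M + ((1 - z)^-1 *: V) *m W) k l =
   (k == l)%:R + (1 - z)^-1 * \sum_j V k j * W j l.
  move=> V k l; rewrite !mxE mulr_sumr; congr (_ + _).
  by apply: eq_bigr => j _; rewrite !mxE mulrA.
have sA0 : forall l, \sum_j V0 0 j * W j l = - z * \sum_j W j l.
  by move=> l; rewrite mulr_sumr; apply: eq_bigr => j _; rewrite mxE.
have sA1 : forall l, \sum_j V1 0 j * W j l = - z * \sum_j W j l.
  by move=> l; rewrite mulr_sumr; apply: eq_bigr => j _; rewrite mxE.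
have sB0 : forall l, \sum_j V0 1 j * W j l = - \sum_j (1 / y j) * W j l.
  by move=> l; rewrite -sumrN; apply: eq_bigr => j _; rewrite mxE /= mulNr.
have sB1 : forall l, \sum_j V1 1 j * W j l =
    \sum_j y j * W j l - \sum_j (1 / y j) * W j l.
  by move=> l; rewrite -sumrB; apply: eq_bigr => j _; rewrite mxE /= mulrBl.
rewrite !det2 !ent !sA0 !sA1 !sB0 !sB1 !eqxx e10 (_ : ((0 : 'I_2) == 1) = false) //.
rewrite s1 sp spy.
have s1y' : \sum_j y j * W j 1 = 2^-1 * ((\sum_k x k - \sum_k y k) ^+ 2
                         - (\sum_k x k ^+ 2 - \sum_k y k ^+ 2)).
  by rewrite -s1y mulrA mulVf // mul1r.
have ep : (1 - z) ^+ N = (1 - z) ^ (N%:Z - 2) * (1 - z) ^+ 2.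
  by rewrite !exprnP -expfzDr // subrK.
have px0 : \prod_k x k != 0 by apply/prodf_neq0.
rewrite s1y' ep prodf_div /Hhat (_ : true%:R = 1 :> F) // (_ : false%:R = 0 :> F) //.
set A := (1 - z) ^ _.
field.
by rewrite px0 hz' h2.
Qed.

Theorem mainTheorem12 (R : rcfType) (n : nat) (x y : 'I_n.+1 -> R[i]) (z : R[i])
  (hx : forall i, x i != 0) (hy : forall j, y j != 0)
  (hxy : forall i j, x i != y j) (hz : z != 1) :
  \sum_(a < n.+1) \sum_(b < n.+1)
     (-1) ^+ (a + b) * y b *
     minor_det (\matrix_(i, j) (z / (x i - y j) * (y j / x i)
                                + 1 / (- x i + y j) * (x i / y j))) a b
  = (1 - z) ^ (n.+1%:Z - 2) *
    (Hhat x y + z * (\prod_(i < n.+1) (y i / x i)) * Hhat y x) *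
    \det (\matrix_(i, j) (1 / (y j - x i))).
Proof.
apply: main_gen => //.
by rewrite pnatr_eq0.
Qed.
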